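(* Fix $c\in\mathbb{N}_0$ and let $A=\mathbb{K}[x_ix_j: i,j\in\mathbb{N},\ i\le j\le i+c]\subseteq R=\mathbb{K}[x_i: i\in\mathbb{N}]$. Then the set of string presentations of the monomials of $A$ is $\{x_{i_1}x_{i_2}\cdots x_{i_{2d-1}}x_{i_{2d}}: d\in\mathbb{N}_0,\ i_1\le i_2\le\cdots\le i_{2d},\ i_{2k}-i_{2k-1}\le c \text{ for } 1\le k\le d\}.$
   Context: $\mathbb{K}$ is a field. The string presentation of a monomial of $R$ is the unique word in the noncommuting letters $x_1,x_2,\dots$ representing it in which the indices appear in nondecreasing order from left to right (e.g. $x_1x_2\cdot x_1x_3$ has string presentation $x_1x_1x_2x_3$). *)

(* Defs.v *)
From mathcomp Require Import all_boot all_algebra.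
From mathcomp Require Import finmap.
From mathcomp.multinomials Require Import monalg.
Set Implicit Arguments. Unset Strict Implicit. Unset Printing Implicit Defensive.
Import GRing.Theory.
Local Open Scope ring_scope.

(* The polynomial ring R = K[x_i : i in nat] in countably many commuting
   variables, as the monoid algebra over commutative monomials indexed by nat.
   The variable x_i is indexed by i; the paper only uses i >= 1. *)
Definition polyR (K : fieldType) := {malg K[cmonom nat]}.

Definition xvar (K : fieldType) (i : nat) : polyR K := << ucm i >>.

Definition algA (K : fieldType) (c : nat) (f : polyR K) : Prop :=
  forall S : polyR K -> Prop,
    S 1 ->
    (forall (a : K) g, S g -> S (a *: g)) ->
    (forall g h, S g -> S h -> S (g + h)) ->
    (forall g h, S g -> S h -> S (g * h)) ->
    (forall i j, (0 < i)%N -> (i <= j)%N -> (j <= i + c)%N -> S (xvar K i * xvar K j)) ->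
    S f.

Definition monom_of_word (w : seq nat) : cmonom nat :=
  (\big[mmul/mone]_(i <- w) ucm i)%M.

Definition string_pres (m : cmonom nat) (w : seq nat) : Prop :=
  sorted leq w /\ monom_of_word w = m.

Definition monom_of_A (K : fieldType) (c : nat) (m : cmonom nat) : Prop :=
  algA c (<< m >> : polyR K).

(* Main.v *)
Require Import Defs.
From mathcomp Require Import all_boot all_algebra.
From mathcomp Require Import finmap.
From mathcomp.multinomials Require Import monalg.
From mathcomp Require Import zify.
Set Implicit Arguments. Unset Strict Implicit. Unset Printing Implicit Defensive.
Import GRing.Theory.
Local Open Scope ring_scope.
Local Open Scope fset_scope.

Definition okp (c a b : nat) : bool :=
  [&& (0 < a)%N, (0 < b)%N, (a - b <= c)%N & (b - a <= c)%N].

Fixpoint paired (c : nat) (u : seq nat) : bool :=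
  match u with
  | [::] => true
  | a :: b :: r => okp c a b && paired c r
  | _ => false
  end.

Lemma ar1 a b x y c : (a - x <= c)%N -> (x - a <= c)%N -> (b - y <= c)%N -> (y - b <= c)%N ->
  (b <= x)%N -> (b <= y)%N -> (a <= b)%N -> ((x - y <= c) && (y - x <= c))%N.
Proof. move=> *; apply/andP; split; lia. Qed.
Lemma ar2 a b x c : (x - a <= c)%N -> (b <= x)%N -> (a <= b)%N -> ((a - b <= c) && (b - a <= c))%N.
Proof. move=> *; apply/andP; split; lia. Qed.
Lemma ar3 i j c : (i <= j)%N -> (j <= i + c)%N -> ((i - j <= c) && (j - i <= c))%N.
Proof. move=> *; apply/andP; split; lia. Qed.

Lemma extract c u a : paired c u -> a \in u ->
  exists x u', [/\ perm_eq u [:: a, x & u'], okp c a x & paired c u'].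
Proof.
move: {2}(size u) (leqnn (size u)) => n; elim: n u => [|n IH] [|a0 [|b0 r]] //=.
move=> Hs /andP[Hok Hp]; rewrite !inE => /orP[/eqP->|/orP[/eqP->|Har]].
- by exists b0, r; split.
- exists a0, r; split => //; last by move: Hok; rewrite /okp => /and4P[-> -> -> ->].
  by rewrite (perm_catCA [:: a0] [:: b0] r).
- have [x [u' [Hpe Hk Hp']]] := IH r (ltnW Hs) Hp Har.
  exists x, [:: a0, b0 & u']; split => //=; last by rewrite Hok.
  rewrite perm_sym (perm_catCA [:: a; x] [:: a0; b0] u') /=.
  by rewrite !perm_cons perm_sym.
Qed.

Lemma sorted_paired c n w u : (size w <= n)%N -> sorted leq w -> perm_eq w u ->
  paired c u -> paired c w.
Proof.
elim: n w u => [|n IH] [|a w'] u //= Hs Hso Hpe Hpu.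
have Hau : a \in u by rewrite -(perm_mem Hpe) inE eqxx.
have [x [u1 [Hp1 Hax Hpu1]]] := extract Hpu Hau.
have Hpe' : perm_eq w' (x :: u1) by rewrite -(perm_cons a) (perm_trans Hpe Hp1).
clear Hpe; case: w' Hs Hso Hpe' => [|b w''] Hs Hso Hpe'; first by have := perm_size Hpe'.
have Hab : (a <= b)%N by case/andP: Hso.
have Hsw : sorted leq w'' by move/path_sorted/path_sorted: Hso.
have Hall : all (leq b) w'' by move/path_sorted: Hso; apply: order_path_min; exact: leq_trans.
have : b \in x :: u1 by rewrite -(perm_mem Hpe') inE eqxx.
rewrite inE => /orP[/eqP Ebx|Hb].
  subst x; rewrite Hax /=; apply: (IH w'' u1) => //.
    exact: ltnW Hs.
  by rewrite -(perm_cons b).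
have [y [u2 [Hp2 Hby Hpu2]]] := extract Hpu1 Hb.
have Hpe2 : perm_eq w'' [:: x, y & u2].
  rewrite -(perm_cons b); apply: (perm_trans Hpe').
  apply: (@perm_trans _ [:: x, b, y & u2]); first by rewrite perm_cons.
  by rewrite (perm_catCA [:: x] [:: b] (y :: u2)).
have Hxw : x \in w'' by rewrite (perm_mem Hpe2) inE eqxx.
have Hyw : y \in w'' by rewrite (perm_mem Hpe2) !inE eqxx orbT.
have Hbx : (b <= x)%N by move/allP: Hall => /(_ x Hxw).
have Hby' : (b <= y)%N by move/allP: Hall => /(_ y Hyw).
have Hxy : okp c x y.
  move: Hax Hby Hbx Hby' Hab; rewrite /okp => /and4P[h1 h2 h3 h4] /and4P[h5 h6 h7 h8] h9 h10 h11.
  by rewrite /okp h2 h6 /=; apply: (ar1 h3 h4 h7 h8).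
have -> : okp c a b.
  move: Hax Hby Hbx Hby' Hab; rewrite /okp => /and4P[h1 h2 h3 h4] /and4P[h5 h6 h7 h8] h9 h10 h11.
  rewrite /okp h1 h5 /=; apply: (ar2 h4 h9 h11).
apply: (IH w'' [:: x, y & u2]) => //=; first exact: ltnW Hs.
by rewrite Hxy.
Qed.


Lemma paired_fwd c n w : (size w <= n)%N -> paired c w ->
  exists d, size w = d.*2 /\ all (fun i => 0 < i)%N w /\
    (forall k, (k < d)%N -> (nth 0 w k.*2.+1 - nth 0 w k.*2 <= c)%N).
Proof.
elim: n w => [|n IH] [|a [|b r]] //=; try by exists 0%N.
move=> Hs /andP[/and4P[h1 h2 h3 h4] Hp].
have [d [Hd [Ha Hk]]] := IH r (ltnW Hs) Hp.
exists d.+1; split; first by rewrite Hd doubleS.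
split; first by rewrite h1 h2 Ha.
by case=> [|k] //= /Hk; rewrite ?doubleS.
Qed.

Lemma paired_bwd c d w : sorted leq w -> size w = d.*2 -> all (fun i => 0 < i)%N w ->
    (forall k, (k < d)%N -> (nth 0 w k.*2.+1 - nth 0 w k.*2 <= c)%N) -> paired c w.
Proof.
elim: d w => [|d IH] [|a [|b r]] //=; rewrite ?doubleS //.
move=> Hso [Hs] /and3P[h1 h2 Ha] Hk.
have Hab : (a <= b)%N by case/andP: Hso.
have Hba := Hk 0%N isT.
apply/andP; split.
  rewrite /okp h1 h2 Hba andbT /=; by have /andP[] := ar2 Hba (leqnn b) Hab.
apply: IH => //; first by case/andP: Hso => _ /path_sorted.
by move=> k Hk'; have := Hk k.+1 Hk'; rewrite ?doubleS.
Qed.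

Lemma monom_of_wordE w i : monom_of_word w i = count_mem i w.
Proof.
elim: w => [|a w IH]; first by rewrite /monom_of_word big_nil cm1.
by rewrite /monom_of_word big_cons cmM -/(monom_of_word w) IH cmU.
Qed.

Lemma monom_of_word_perm w u : monom_of_word w = monom_of_word u -> perm_eq w u.
Proof.
move=> E; apply/allP => x _ /=; apply/eqP.
by rewrite -!monom_of_wordE E.
Qed.

Lemma monom_of_word_cat w u :
  monom_of_word (w ++ u) = mmul (monom_of_word w) (monom_of_word u).
Proof. by rewrite /monom_of_word big_cat. Qed.

Lemma malgUM (K : fieldType) (k1 k2 : cmonom nat) :
  (<< k1 >> : polyR K) * << k2 >> = << mmul k1 k2 >>.
Proof. by rewrite malgM_def fgmulUU mulr1. Qed.

Lemma paired_algA (K : fieldType) c u : paired c u -> algA c (<< monom_of_word u >> : polyR K).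
Proof.
move: {2}(size u) (leqnn (size u)) => n; elim: n u => [|n IH] [|a [|b r]] //=.
- by move=> _ _ S H1 _ _ _ _; rewrite /monom_of_word big_nil.
- by move=> _ _ S H1 _ _ _ _; rewrite /monom_of_word big_nil.
move=> Hs /andP[/and4P[h1 h2 h3 h4] Hp] S H1 HZ HD HM HG.
have Hr := IH r (ltnW Hs) Hp S H1 HZ HD HM HG.
have -> : monom_of_word [:: a, b & r] = mmul (mmul (ucm a) (ucm b)) (monom_of_word r).
  by rewrite /monom_of_word !big_cons mulmA.
have H12 : S (<< mmul (ucm a) (ucm b) >> : polyR K).
  case: (leqP a b) => Hab.
    have := HG a b h1 Hab; rewrite /xvar malgUM; apply.
    by rewrite -leq_subLR.
  have := HG b a h2 (ltnW Hab); rewrite /xvar malgUM mulmC; apply.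
  by rewrite -leq_subLR.
by have := HM _ _ H12 Hr; rewrite malgUM.
Qed.

Lemma paired_cat c u1 u2 : paired c u1 -> paired c u2 -> paired c (u1 ++ u2).
Proof.
move: {2}(size u1) (leqnn (size u1)) => n; elim: n u1 => [|n IH] [|a [|b r]] //=.
by move=> Hs /andP[-> Hr] H2; apply: IH => //; exact: ltnW.
Qed.

Lemma algA_paired (K : fieldType) c m : algA c (<< m >> : polyR K) ->
  exists u, paired c u /\ monom_of_word u = m.
Proof.
move=> H.
pose S := fun f : polyR K => forall k, k \in msupp f -> exists u, paired c u /\ monom_of_word u = k.
suff HS : S << m >>.
  by apply: HS; rewrite (msuppU1 K m) fset11.
apply: H.
- move=> k; rewrite (msuppU1 K (mone : cmonom nat)) in_fset1 => /eqP->.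
  by exists [::]; rewrite /monom_of_word big_nil.
- by move=> a g Hg k /(fsubsetP (msuppZ_le a g)); apply: Hg.
- move=> g h Hg Hh k /(fsubsetP (msuppD_le g h)); rewrite in_fsetU => /orP[]; [apply: Hg|apply: Hh].
- move=> g h Hg Hh k /msuppM_le [k1 [k2 [/Hg [u1 [P1 E1]] /Hh [u2 [P2 E2]] ->]]].
  exists (u1 ++ u2); split; last by rewrite monom_of_word_cat E1 E2.
  exact: paired_cat.
- move=> i j Hi Hij Hjc k; rewrite /xvar malgUM (msuppU1 K) in_fset1 => /eqP->.
  exists [:: i; j]; split.
    rewrite /= andbT /okp Hi (leq_trans Hi Hij) /=.
    exact: ar3.
  by rewrite /monom_of_word !big_cons big_nil mulm1.
Qed.

Local Close Scope fset_scope.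
Local Close Scope ring_scope.

Theorem lemma5p1 (K : fieldType) (c : nat) (w : seq nat) :
  (exists m : cmonom nat, monom_of_A K c m /\ string_pres m w) <->
  (exists d : nat,
      size w = d.*2 /\ sorted leq w /\ all (fun i => 0 < i) w /\
      (forall k : nat, k < d -> nth 0 w k.*2.+1 - nth 0 w k.*2 <= c)).
Proof.
split.
  move=> [m [HA [Hso Hw]]].
  have [u [Hp Hu]] := algA_paired HA.
  have Hpw : paired c w.
    apply: (sorted_paired (leqnn _) Hso _ Hp).
    by apply: monom_of_word_perm; rewrite Hw Hu.
  have [d [H1 [H2 H3]]] := paired_fwd (leqnn _) Hpw.
  by exists d.
move=> [d [H1 [H2 [H3 H4]]]].
exists (monom_of_word w); split; last by [].
exact: paired_algA (paired_bwd H2 H1 H3 H4).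
Qed.
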